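(* Let $r$ be a positive integer and $(S,\mathcal T)$ a feasible instance of test set with redundancy $r$, with $|S|=n$. Let $\mathcal T^*$ be an optimal (minimum-cardinality) $r$-test set, $m^*=|\mathcal T^*|$, let $\#_0=rn(n-1)/2$, and let $\#_B$ be the number of item pairs differentiated by exactly $r$ tests in $\mathcal T^*$; assume $\#_B>0$. Then the size of every solution returned by the set cover greedy algorithm SGA (with any tie-breaking) is at most $$\Big(\ln\#_0-\frac{1}{r+1}\ln\frac{\#_0}{\#_B}+\frac{r}{r+1}\ln(r+1)+1\Big)m^*+1.$$
   Context: Test set with redundancy $r\in\mathbb Z^+$: the input is a finite set of items $S$ with $|S|=n$ and a collection $\mathcal T$ of subsets of $S$ (called tests); it is assumed that there are no two tests $T_1,T_2\in\mathcal T$ with $T_1=S-T_2$. An item pair is a set $\{i,j\}$ of two different items of $S$. A test $T$ differentiates an item pair $a$ if $|T\cap a|=1$; for a family $\mathcal F$ of tests, $\perp(a,\mathcal F)$ denotes the number of tests in $\mathcal F$ that differentiate $a$. A family $\mathcal T'\subseteq\mathcal T$ is an $r$-test set of $S$ if every item pair is differentiated by at least $r$ different tests of $\mathcal T'$; the goal is to find an $r$-test set of minimum cardinality (the instance is feasible if some $r$-test set exists). For a family $\bar{\mathcal T}\subseteq\mathcal T$ define the differentiation measure $\#(\bar{\mathcal T})=\sum_a\max(r-\perp(a,\bar{\mathcal T}),0)$, the sum over all item pairs $a$; note $\#(\varnothing)=rn(n-1)/2$. The set cover greedy algorithm SGA: start with $\bar{\mathcal T}=\varnothing$; while $\#(\bar{\mathcal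 T})>0$, select a test $T\in\mathcal T-\bar{\mathcal T}$ minimizing $\#(\bar{\mathcal T}\cup\{T\})$ and set $\bar{\mathcal T}\leftarrow\bar{\mathcal T}\cup\{T\}$; return $\bar{\mathcal T}$. *)

(* Defs.v *)
From Stdlib Require Import Reals.
From mathcomp Require Import all_boot.

Set Implicit Arguments.
Unset Strict Implicit.
Unset Printing Implicit Defensive.

Section TestSet.
Variable S : finType.

Definition item_pair (a : {set S}) : bool := #|a| == 2.

Definition differentiates (T a : {set S}) : bool := #|T :&: a| == 1.

Definition perp (a : {set S}) (F : {set {set S}}) : nat :=
  #|[set T in F | differentiates T a]|.

Definition is_r_test_set (TT : {set {set S}}) (r : nat) (F : {set {set S}}) : Prop :=
  F \subset TT /\ forall a : {set S}, item_pair a -> r <= perp a F.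

(* differentiation measure  #(F) = sum_a max(r - perp(a,F), 0)
   (truncated nat subtraction is exactly max(_,0)) *)
Definition measure (r : nat) (F : {set {set S}}) : nat :=
  \sum_(a : {set S} | item_pair a) (r - perp a F).

(* s is a complete run of the greedy algorithm SGA (with some tie-breaking):
   s lists the selected tests in selection order. *)
Definition sga_run (TT : {set {set S}}) (r : nat) (s : seq {set S}) : Prop :=
  (forall i, i < size s ->
     let F := [set X in take i s] in
     0 < measure r F /\
     nth set0 s i \in TT :\: F /\
     (forall T', T' \in TT :\: F ->
        measure r (nth set0 s i |: F) <= measure r (T' |: F))) /\
  measure r [set X in s] = 0.

End TestSet.

Section Bound.
Local Open Scope R_scope.
Definition diff0 (r n : nat) : R := INR r * INR n * (INR n - 1) / 2.
Definition sga_bound (r n m dB : nat) : R :=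
  (ln (diff0 r n) - / (INR r + 1) * ln (diff0 r n / INR dB)
   + INR r / (INR r + 1) * ln (INR r + 1) + 1) * INR m + 1.
End Bound.

(* Main.v *)
Require Import Defs.
From Stdlib Require Import Reals Lra Lia.
From mathcomp Require Import all_boot zify.

Set Implicit Arguments.
Unset Strict Implicit.
Unset Printing Implicit Defensive.

Section Comb.
Variable S : finType.
Variable r : nat.

Definition gain (T : {set S}) (F : {set {set S}}) : nat :=
  \sum_(a : {set S} | item_pair a) ((differentiates T a) && (perp a F < r)).

Lemma perp_sum (a : {set S}) (G : {set {set S}}) :
  perp a G = \sum_(T in G) (differentiates T a : nat).
Proof.
rewrite /perp -sum1_card big_mkcond /= [RHS]big_mkcond /=.
apply: eq_bigr => T _; rewrite !inE; case: (T \in G); case: (differentiates T a) => //.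
Qed.

Lemma perpU (T : {set S}) (F : {set {set S}}) (a : {set S}) : T \notin F ->
  perp a (T |: F) = perp a F + differentiates T a.
Proof.
move=> TF; rewrite !perp_sum big_setU1 //= addnC.
congr (_ + _); apply: eq_bigl => i //.
Qed.

Lemma measureU (T : {set S}) (F : {set {set S}}) : T \notin F -> measure r F = measure r (T |: F) + gain T F.
Proof.
move=> TF; rewrite /measure /gain -big_split /=; apply: eq_bigr => a _.
rewrite perpU //; case: (differentiates T a) => /=; case: (ltnP (perp a F) r) => h; lia.
Qed.

Lemma sum_gain (A F : {set {set S}}) :
  \sum_(T in A) gain T F =
  \sum_(a : {set S} | item_pair a) (perp a F < r) * perp a A.
Proof.
rewrite /gain exchange_big /=; apply: eq_bigr => a _.
case: (perp a F < r); rewrite (perp_sum a A).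
  by rewrite mul1n; apply: eq_bigr => T _; rewrite andbT.
by rewrite mul0n big1 // => T _; rewrite andbF.
Qed.

Lemma perp_sub (a : {set S}) (T0 F : {set {set S}}) :
  perp a T0 <= perp a (T0 :\: F) + perp a F.
Proof.
rewrite !perp_sum (big_setID F) /= addnC leq_add2l.
rewrite [X in _ <= X](big_setID T0) /= setIC leq_addr //.
Qed.

Lemma key_step (TT Tstar F : {set {set S}}) (T0 : {set S}) :
  Tstar \subset TT ->
  (forall a, item_pair a -> r <= perp a Tstar) ->
  T0 \in TT :\: F ->
  (forall T', T' \in TT :\: F -> measure r (T0 |: F) <= measure r (T' |: F)) ->
  let D := measure r F in
  let x := #|[set a : {set S} | item_pair a && (perp a Tstar == r)]| in
  let g := gain T0 F in
  D = measure r (T0 |: F) + g /\ D <= #|Tstar| * g /\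
  (r.+1) * D <= r * (#|Tstar| * g) + r * x.
Proof.
move=> sub pairs T0in greedy D x g.
have T0F : T0 \notin F by move: T0in; rewrite inE => /andP [].
split; first exact: measureU.
have gle : forall T, T \in Tstar :\: F -> gain T F <= g.
  move=> T; rewrite inE => /andP [TF Tst].
  have TinT : T \in TT :\: F by rewrite inE TF (subsetP sub).
  have := greedy _ TinT; rewrite /g.
  have := measureU TF; have := measureU T0F. move=> h1 h2 h3. by rewrite -(leq_add2l (measure r (T |: F))) -h2 h1 leq_add2r.
have H1 : \sum_(T in Tstar :\: F) gain T F <= #|Tstar| * g.
  apply: (@leq_trans (\sum_(T in Tstar :\: F) g)); first exact: leq_sum.
  rewrite sum_nat_const; apply: leq_mul (leqnn _).
  by apply: subset_leq_card; apply: subsetDl.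
set N := \sum_(a : {set S} | item_pair a) ((perp a F < r) && (perp a Tstar != r)).
have H2 : D + N <= \sum_(T in Tstar :\: F) gain T F.
  rewrite sum_gain /D /measure /N -big_split /=; apply: leq_sum => a pa.
  have := pairs a pa; have := perp_sub a Tstar F.
  move=> h1 h2; case: (ltnP (perp a F) r) => h /=; case: (eqVneq (perp a Tstar) r) => /= h3; lia.
have H3 : D <= r * x + r * N.
  have -> : x = \sum_(a : {set S} | item_pair a) (perp a Tstar == r : nat).
    by rewrite /x -sum1_card big_mkcond /= [RHS]big_mkcond; apply: eq_bigr => a _;
       rewrite !inE; case: (item_pair a); case: (perp a Tstar == r).
  rewrite /D /measure /N !big_distrr -big_split /=; apply: leq_sum => a pa.
  case: (eqVneq (perp a Tstar) r) => /= h; case: (ltnP (perp a F) r) => /= h2; lia.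
split; first lia.
have : r * (D + N) <= r * (#|Tstar| * g) by rewrite leq_mul2l; apply/orP; right; lia.
nia.
Qed.

End Comb.

Section RealS.
Local Open Scope R_scope.
Lemma ln_le' x y : 0 < x -> x <= y -> ln x <= ln y.
Proof.
move=> hx hxy; case: (Rle_lt_or_eq_dec _ _ hxy) => h.
  by apply: Rlt_le; apply: ln_increasing.
by rewrite h; apply: Rle_refl.
Qed.
Arguments ln_le' {x y}.

Lemma ln_step u v c : 0 < v -> 0 < u -> v <= (1 - c) * u -> ln v <= ln u - c.
Proof.
move=> hv hu hvu.
have hc : 0 < 1 - c.
  case: (Rle_or_lt (1 - c) 0) => // h.
  have : (1 - c) * u <= 0 by nra.
  lra.
have := ln_le' hv hvu; rewrite ln_mult //.
have : ln (1 - c) <= - c.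
  rewrite -[X in _ <= X]ln_exp; apply: ln_le' => //.
  have := exp_ineq1_le (- c); lra.
lra.
Qed.

Arguments ln_step {u v c}.
Lemma ln_iter (u : nat -> R) c a t : 0 < u a ->
  (forall i, (i < t)%N -> 0 < u (a + i).+1%N /\ u (a + i).+1%N <= (1 - c) * u (a + i)%N) ->
  ln (u (a + t)%N) <= ln (u a) - c * INR t.
Proof.
move=> h0; elim: t => [|t IH] H.
  by rewrite addn0 /=; lra.
have IH' := IH (fun i hi => H i (ltnW (leq_trans hi (ltnSn t)))).
have [h1 h2] := H t (ltnSn t).
have hpos : 0 < u (a + t)%N.
  case: t IH IH' H h1 h2 => [|t] _ _ H _ _; first by rewrite addn0.
  by rewrite addnS; have [] := H t (leqW (ltnSn t)).
have := ln_step h1 hpos h2; rewrite addnS S_INR; lra.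
Qed.

Lemma real_part (Dn : nat -> nat) (k m r x P : nat) :
  (0 < r)%N -> (0 < x)%N -> (x <= P)%N -> (1 <= m)%N ->
  Dn 0%N = (r * P)%N ->
  (forall i, (i < k)%N -> (0 < Dn i)%N) ->
  (forall i, (i < k)%N -> exists g, Dn i = (Dn i.+1 + g)%N /\ (Dn i <= m * g)%N /\
       (r.+1 * Dn i <= r * (m * g) + r * x)%N) ->
  INR k <= (ln (INR (r * P)) - / (INR r + 1) * ln (INR (r * P) / INR x)
   + INR r / (INR r + 1) * ln (INR r + 1) + 1) * INR m + 1.
Proof.
move=> r0 x0 xP m1 HD0 Hpos Hstep.
set R := INR r; set M := INR m; set X := INR x; set Z := INR (r * P).
have R1 : 1 <= R by rewrite /R; apply: (le_INR 1); apply/leP.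
have M1 : 1 <= M by rewrite /M; apply: (le_INR 1); apply/leP.
have X1 : 1 <= X by rewrite /X; apply: (le_INR 1); apply/leP.
have ZRX : R * X <= Z.
  rewrite /Z /R /X -mult_INR; apply: le_INR; apply/leP; by rewrite leq_mul2l xP orbT.
set Dr := fun i => INR (Dn i).
set u := fun i => (R + 1) * Dr i - R * X.
have stepA : forall i, (i < k)%N -> Dr i.+1 <= (1 - 1 / M) * Dr i.
  move=> i ik; have [g [e [h1 h2]]] := Hstep i ik.
  have h1' : Dr i <= M * INR g by rewrite /Dr /M -mult_INR; apply: le_INR; apply/leP.
  have e' : Dr i = Dr i.+1 + INR g by rewrite /Dr e plus_INR.
  have : M * Dr i.+1 <= (M - 1) * Dr i by rewrite e' in h1' *; nra.
  move=> h; apply: (Rmult_le_reg_l M); first lra.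
  have -> : M * ((1 - 1 / M) * Dr i) = (M - 1) * Dr i by field; lra.
  exact: h.
have stepB : forall i, (i < k)%N -> u i.+1 <= (1 - (R + 1) / (R * M)) * u i.
  move=> i ik; have [g [e [h1 h2]]] := Hstep i ik.
  have h2' : (R + 1) * Dr i <= R * (M * INR g) + R * X.
    move/leP/le_INR: h2; rewrite !plus_INR !mult_INR. move=> h; rewrite /Dr /R /M /X; lra.
  have e' : Dr i = Dr i.+1 + INR g by rewrite /Dr e plus_INR.
  have h : R * M * u i.+1 <= (R * M - R - 1) * u i.
    rewrite /u e' in h2' *; nra.
  apply: (Rmult_le_reg_l (R * M)); first nra.
  have -> : R * M * ((1 - (R + 1) / (R * M)) * u i) = (R * M - R - 1) * u i
    by field; nra.
  exact: h.
have Hex : exists j, (j == k) || (Dn j <= r * x)%N by exists k; rewrite eqxx.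
case: (ex_minnP Hex) => j Hj Hmin.
have jk : (j <= k)%N by apply: Hmin; rewrite eqxx.
have big : forall i, (i < j)%N -> R * X < Dr i.
  move=> i ij; rewrite /R /X /Dr -mult_INR; apply: lt_INR; apply/ltP.
  rewrite ltnNge; apply/negP => h; have := Hmin i; rewrite h orbT => /(_ isT).
  by rewrite leqNgt ij.
have L1pos : 0 <= ln ((R + 1) * Z) - ln (R * R * X).
  have : ln (R * R * X) <= ln ((R + 1) * Z) by apply: ln_le'; nra.
  lra.
have L2pos : 0 <= ln (R * X) by rewrite -ln_1; apply: ln_le'; nra.
have Ph1 : INR j <= 1 + (R * M / (R + 1)) * (ln ((R + 1) * Z) - ln (R * R * X)).
  case: j Hj Hmin jk big => [|j'] Hj Hmin jk big.
    have : 0 <= R * M / (R + 1) * (ln ((R + 1) * Z) - ln (R * R * X)).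
      apply: Rmult_le_pos => //; apply: Rmult_le_pos; try nra.
      by apply: Rlt_le; apply: Rinv_0_lt_compat; lra.
    rewrite /=; lra.
  have hu0 : 0 < u 0%N by have := big 0%N isT; rewrite /u; nra.
  have it := @ln_iter u ((R + 1) / (R * M)) 0 j' hu0.
  rewrite add0n in it.
  have it' : ln (u j') <= ln (u 0%N) - (R + 1) / (R * M) * INR j'.
    apply: it => i hi; rewrite add0n; split; last exact: (stepB i (leq_trans hi (ltnW jk))).
    have h := big i.+1 hi; rewrite /u; nra.
  have hul : R * R * X < u j' by have := big j' (ltnSn j'); rewrite /u; nra.
  have l1 : ln (R * R * X) < ln (u j') by apply: ln_increasing => //; nra.
  have l2 : ln (u 0%N) <= ln ((R + 1) * Z).
    apply: ln_le' => //; rewrite /u /Dr HD0 -/Z; nra.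
  have hc : (R + 1) / (R * M) * INR j' <= ln ((R + 1) * Z) - ln (R * R * X) by lra.
  rewrite S_INR.
  have -> : INR j' = R * M / (R + 1) * ((R + 1) / (R * M) * INR j') by field; nra.
  have : R * M / (R + 1) * ((R + 1) / (R * M) * INR j') <=
         R * M / (R + 1) * (ln ((R + 1) * Z) - ln (R * R * X)).
    apply: Rmult_le_compat_l => //; apply: Rmult_le_pos; try nra.
    by apply: Rlt_le; apply: Rinv_0_lt_compat; lra.
  lra.
have Ph2 : INR k <= INR j + 1 + M * ln (R * X).
  case: (eqVneq j k) => [<-|jnk]; first by have h00 := Rmult_le_pos _ _ (Rle_trans _ _ _ Rle_0_1 M1) L2pos; lra.
  have jlt : (j < k)%N by rewrite ltn_neqAle jnk jk.
  have hjx : Dr j <= R * X.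
    move: Hj; rewrite (negbTE jnk) /= => /leP/le_INR; rewrite mult_INR //.
  have hj0 : 0 < Dr j by rewrite /Dr; apply: (lt_INR 0); apply/ltP; exact: Hpos.
  set t := (k - j.+1)%N.
  have kt : k = (j + t).+1 by rewrite /t; lia.
  have it := @ln_iter Dr (1 / M) j t hj0.
  have it' : ln (Dr (j + t)%N) <= ln (Dr j) - 1 / M * INR t.
    apply: it => i hi; split; last by apply: stepA; lia.
    rewrite /Dr; apply: (lt_INR 0); apply/ltP; apply: Hpos; lia.
  have hend : 0 <= ln (Dr (j + t)%N).
    rewrite -ln_1; apply: ln_le'; first lra.
    rewrite /Dr; apply: (le_INR 1); apply/leP; apply: Hpos; lia.
  have hlj : ln (Dr j) <= ln (R * X) by apply: ln_le'.
  have ht : 1 / M * INR t <= ln (R * X) by lra.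
  have : INR t <= M * ln (R * X).
    have -> : INR t = M * (1 / M * INR t) by field; lra.
    apply: Rmult_le_compat_l; lra.
  rewrite kt S_INR plus_INR; lra.
have lnZX : ln (Z / X) = ln Z - ln X.
  have Z0 : 0 < Z by nra.
  have iX : 0 < / X by apply: Rinv_0_lt_compat; lra.
  rewrite /Rdiv ln_mult ?ln_Rinv //; lra.
have lnA : ln ((R + 1) * Z) = ln (R + 1) + ln Z by apply: ln_mult; nra.
have lnB : ln (R * R * X) = ln R + ln R + ln X by rewrite !ln_mult //; nra.
have lnC : ln (R * X) = ln R + ln X by rewrite ln_mult //; nra.
have lR : 0 <= ln R by rewrite -ln_1; apply: ln_le'; lra.
rewrite lnZX.
rewrite lnA lnB in Ph1; rewrite lnC in Ph2.
move: Ph1 Ph2; set lr := ln R; set lx := ln X; set lz := ln Z; set l1 := ln (R + 1) => Ph1 Ph2.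
have diff :
  (lz - / (R + 1) * (lz - lx) + R / (R + 1) * l1 + 1) * M + 1
  - (2 + R * M / (R + 1) * (l1 + lz - (lr + lr + lx)) + M * (lr + lx))
  = (M - 1) + M * (R - 1) * lr * / (R + 1) by field; lra.
have : 0 <= M * (R - 1) * lr * / (R + 1).
  apply: Rmult_le_pos; last by apply: Rlt_le; apply: Rinv_0_lt_compat; lra.
  apply: Rmult_le_pos => //; nra.
lra.
Qed.
End RealS.

Lemma set_rcons (T : finType) (t : seq T) (y : T) :
  [set X in rcons t y] = y |: [set X in t].
Proof. by apply/setP => z; rewrite !inE mem_rcons in_cons. Qed.

Theorem lemma2 (S : finType) (TT : {set {set S}}) (r : nat)
  (Tstar : {set {set S}}) (s : seq {set S}) :
  0 < r ->
  (forall T1 T2, T1 \in TT -> T2 \in TT -> T1 <> ~: T2) ->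
  is_r_test_set TT r Tstar ->
  (forall F, is_r_test_set TT r F -> #|Tstar| <= #|F|) ->
  0 < #|[set a : {set S} | item_pair a && (perp a Tstar == r)]| ->
  sga_run TT r s ->
  Rle (INR #|[set X in s]|)
      (sga_bound r #|S| #|Tstar|
         #|[set a : {set S} | item_pair a && (perp a Tstar == r)]|).
Proof.
move=> r0 _ [sub pairs] _ xpos [Hrun _].
set x := #|[set a : {set S} | item_pair a && (perp a Tstar == r)]| in xpos *.
set P := #|[set a : {set S} | item_pair a]|.
have xP : x <= P.
  by apply: subset_leq_card; apply/subsetP => a; rewrite !inE => /andP [].
have m1 : 0 < #|Tstar|.
  case/card_gt0P: xpos => a; rewrite inE => /andP [pa /eqP pr].
  apply: leq_trans r0 _; rewrite -pr /perp; apply: subset_leq_card.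
  by apply/subsetP => T; rewrite inE => /andP [].
set Dn := fun i => measure r [set X in take i s].
have D0 : Dn 0 = r * P.
  rewrite /Dn take0 /measure.
  rewrite (eq_bigr (fun _ => r)); last first.
    move=> a _; rewrite perp_sum big_pred0 ?subn0 // => T; by rewrite !inE.
  have -> : \sum_(i : {set S} | item_pair i) r = \sum_(i in [set a : {set S} | item_pair a]) r
    by rewrite big_mkcond [RHS]big_mkcond; apply: eq_bigr => a _; rewrite inE.
  by rewrite sum_nat_const mulnC.
have P2 : P * 2 = #|S| * (#|S| - 1).
  rewrite /P (_ : [set a : {set S} | item_pair a] = [set A : {set S} | #|A| == 2]) //.
  rewrite card_draws (bin_ffact _ 2) !ffactnS ffactn0; lia.
have Hd0 : Defs.diff0 r #|S| = INR (r * P).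
  rewrite /Defs.diff0 mult_INR.
  have hh : Rmult (INR #|S|) (Rminus (INR #|S|) 1) = Rmult 2 (INR P).
    case e: #|S| => [|n].
      have P0 : P = 0 by move: P2; rewrite e; lia.
      rewrite P0 /=; lra.
    rewrite -(minus_INR _ 1); last by apply/leP.
    rewrite -mult_INR.
    have -> : (n.+1 * (n.+1 - 1))%coq_nat = P * 2 by rewrite P2 e.
    rewrite mult_INR /=; lra.
  rewrite Rmult_assoc hh; field.
have Hstep : forall i, i < size s -> exists g, Dn i = Dn i.+1 + g /\ Dn i <= #|Tstar| * g /\
       r.+1 * Dn i <= r * (#|Tstar| * g) + r * x.
  move=> i ik; have [_ [Tin greedy]] := Hrun i ik.
  have [e [h1 h2]] := key_step sub pairs Tin greedy.
  exists (gain r (nth set0 s i) [set X in take i s]).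
  by rewrite /Dn (take_nth set0 ik) set_rcons.
have Hpos : forall i, i < size s -> 0 < Dn i by move=> i ik; have [] := Hrun i ik.
apply: Rle_trans; first by apply: le_INR; apply/leP; rewrite cardsE; exact: card_size.
rewrite /sga_bound Hd0.
exact: (real_part r0 xpos xP m1 D0 Hpos Hstep).
Qed.
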